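(* Let $\kappa_1,\kappa_2,\kappa_5,\kappa_6,\kappa_7,\kappa_8,\theta,\mu>0$ and consider the ODE system, with positive initial values, $c'=\kappa_6c_p-\kappa_5c$, $c_p'=\kappa_5c+\kappa_8c_{pp}-(\kappa_6+\kappa_7)c_p$, $c_{pp}'=\kappa_7c_p-\kappa_8c_{pp}$, $(x^* )'=\kappa_2c_{pp}m-\kappa_1x^*$, $z'=z(\theta m-\mu)$, where $m(t)=\dfrac{\kappa_1x^*(t)+\mu z(t)}{\kappa_2c_{pp}(t)+\theta z(t)}$. Let $M=x^*(0)+z(0)$, $L=c(0)+c_p(0)+c_{pp}(0)$, and $\bar c_{pp}=\dfrac{\kappa_5\kappa_6\kappa_7\kappa_8L}{\kappa_6^2\kappa_8^2+\kappa_5\kappa_6\kappa_8^2+\kappa_5\kappa_6\kappa_7\kappa_8}$. If $\theta\kappa_1M>\mu\kappa_2\bar c_{pp}$, then $z(t)\to\dfrac{\theta\kappa_1M-\mu\kappa_2\bar c_{pp}}{\theta\kappa_1}$ as $t\to\infty$.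
   Context: This is the deterministic part of a hybrid approximation of a dimer-catalyzer network controlled by a basic ACR controller; $m(t)$ represents the mean of the stochastically modeled target species. (The full system also contains a variable $x_1$ with $x_1'=0$, which does not affect the equations above.) *)

(* Defs.v *)
From Stdlib Require Import Reals.
From Coquelicot Require Import Coquelicot.
Open Scope R_scope.

Definition m_of (k1 k2 theta mu xs z cpp : R) : R :=
  (k1 * xs + mu * z) / (k2 * cpp + theta * z).

Definition cpp_bar (k5 k6 k7 k8 L : R) : R :=
  k5 * k6 * k7 * k8 * L /
  (k6 ^ 2 * k8 ^ 2 + k5 * k6 * k8 ^ 2 + k5 * k6 * k7 * k8).

Definition right_cont (f : R -> R) (a : R) : Prop :=
  filterlim f (at_right a) (locally (f a)).

(* Main.v *)
Require Import Defs.
From Stdlib Require Import Reals Lra Psatz Classical.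
From Coquelicot Require Import Coquelicot.
Open Scope R_scope.

Lemma mvt_open f df a b : a < b ->
  (forall x, a < x < b -> is_derive f x (df x)) ->
  (forall x, a <= x <= b -> continuity_pt f x) ->
  exists c, a < c < b /\ f b - f a = df c * (b - a).
Proof.
  intros Hab Hd Hc.
  assert (pr1 : forall c, a < c < b -> derivable_pt f c).
  { intros c Hc'. exists (df c). apply is_derive_Reals. now apply Hd. }
  assert (pr2 : forall c, a < c < b -> derivable_pt id c).
  { intros c _. apply derivable_pt_id. }
  destruct (MVT f id a b pr1 pr2 Hab Hc) as [c [P HP]].
  { intros c _. apply derivable_continuous_pt, derivable_pt_id. }
  exists c; split; [exact P|].
  assert (E1 : derive_pt f c (pr1 c P) = df c).
  { apply derive_pt_eq_0. apply is_derive_Reals. now apply Hd. }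
  assert (E2 : derive_pt id c (pr2 c P) = 1).
  { apply derive_pt_eq_0. apply derivable_pt_lim_id. }
  rewrite E1, E2 in HP. unfold id in HP. lra.
Qed.

Lemma cont_of_derive f df x : 
  (forall y, 0 < y -> is_derive f y (df y)) -> 0 < x -> continuity_pt f x.
Proof.
  intros Hd Hx. apply derivable_continuous_pt.
  exists (df x). apply is_derive_Reals. now apply Hd.
Qed.

Lemma right_cont_of_derive f df x :
  (forall y, 0 < y -> is_derive f y (df y)) -> 0 < x -> right_cont f x.
Proof.
  intros Hd Hx. unfold right_cont.
  apply (filterlim_filter_le_1 (F := locally x)).
  - apply filter_le_within.
  - apply continuity_pt_filterlim. now apply cont_of_derive with df.
Qed.

Lemma right_cont_pos f t : right_cont f t -> 0 < f t ->
  exists d, 0 < d /\ forall s, t <= s < t + d -> 0 < f s.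
Proof.
  intros Hc Hp. unfold right_cont in Hc.
  apply filterlim_locally with (eps := mkposreal _ Hp) in Hc.
  destruct Hc as [d Hd]. exists d. split; [apply cond_pos|].
  intros s [H1 H2]. destruct (Req_dec s t) as [->|Hne]; [exact Hp|].
  assert (B : ball (f t) (mkposreal _ Hp) (f s)).
  { apply Hd; [|lra]. unfold ball; simpl; unfold AbsRing_ball, abs, minus, plus, opp; simpl.
    rewrite Rabs_pos_eq; lra. }
  unfold ball in B; simpl in B; unfold AbsRing_ball, abs, minus, plus, opp in B; simpl in B.
  apply Rabs_def2 in B. lra.
Qed.

Lemma right_cont_plus f g : right_cont f 0 -> right_cont g 0 ->
  right_cont (fun s => f s + g s) 0.
Proof.
  unfold right_cont; intros Hf Hg.
  eapply filterlim_comp_2; [exact Hf|exact Hg|].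
  apply (filterlim_plus (K:=R_AbsRing) (V:=R_NormedModule)).
Qed.

Lemma right_cont_mexp f k : right_cont f 0 ->
  right_cont (fun s => f s * exp (k * s)) 0.
Proof.
  unfold right_cont; intros Hf.
  eapply filterlim_comp_2; [exact Hf| |].
  - apply (filterlim_filter_le_1 (F := locally 0)). apply filter_le_within.
    apply continuity_pt_filterlim. apply derivable_continuous_pt.
    apply derivable_pt_comp. apply derivable_pt_scal, derivable_pt_id. apply derivable_pt_exp.
  - apply (filterlim_mult (K:=R_AbsRing)).
Qed.

Lemma mvt0 f df b : 0 < b -> right_cont f 0 ->
  (forall x, 0 < x -> is_derive f x (df x)) ->
  exists c, 0 < c < b /\ f b - f 0 = df c * b.
Proof.
  intros Hb Hc Hd.
  set (g := fun x => f (Rmax 0 x)).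
  assert (Dg : forall x, 0 < x -> is_derive g x (df x)).
  { intros x Hx. apply (is_derive_ext_loc f). 2: now apply Hd.
    exists (mkposreal _ Hx). intros y Hy.
    unfold ball in Hy; simpl in Hy; unfold AbsRing_ball, abs, minus, plus, opp in Hy; simpl in Hy.
    apply Rabs_def2 in Hy. unfold g. rewrite Rmax_right; lra. }
  destruct (mvt_open g df 0 b Hb) as [c [Hc1 Hc2]].
  - intros x Hx. apply Dg; lra.
  - intros x [H1 H2]. destruct (Rle_lt_or_eq_dec 0 x H1) as [Hx| <-].
    + now apply cont_of_derive with df.
    + apply continuity_pt_filterlim. apply filterlim_locally. intros eps.
      unfold right_cont in Hc. apply filterlim_locally with (eps := eps) in Hc.
      destruct Hc as [d Hd']. exists d. intros y Hy.
      unfold g. destruct (Rle_dec y 0) as [Hy0|Hy0].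
      * rewrite (Rmax_left 0 y) by lra. rewrite Rmax_left by lra. apply ball_center.
      * rewrite (Rmax_right 0 y) by lra. rewrite Rmax_left by lra. apply Hd'; [exact Hy|lra].
  - exists c. split; [exact Hc1|]. unfold g in Hc2.
    rewrite Rmax_right in Hc2 by lra. rewrite Rmax_left in Hc2 by lra. lra.
Qed.

Lemma cont_induction (P : R -> Prop) :
  (forall t, 0 <= t -> (forall s, 0 <= s < t -> P s) ->
     exists d, 0 < d /\ forall s, 0 <= s < t + d -> P s) ->
  forall t, 0 <= t -> P t.
Proof.
  intros H T HT.
  set (E := fun t => 0 <= t <= T + 1 /\ forall s, 0 <= s < t -> P s).
  assert (Eb : bound E). { exists (T+1). intros x [Hx _]. lra. }
  assert (Ene : exists x, E x). { exists 0. split; [lra|]. intros s Hs; lra. }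
  destruct (completeness E Eb Ene) as [m [Hub Hlub]].
  assert (Hm0 : 0 <= m). { apply Hub. split; [lra|]. intros s Hs; lra. }
  assert (HmT : m <= T + 1). { apply Hlub. intros x [Hx _]. lra. }
  assert (Hbelow : forall s, 0 <= s < m -> P s).
  { intros s Hs. destruct (classic (exists x, E x /\ s < x)) as [[x [[_ Ex] Hx]]|Hn].
    - apply Ex; lra.
    - exfalso. assert (m <= s); [|lra]. apply Hlub. intros x Ex.
      destruct (Rle_dec x s) as [|Hxs]; [assumption|]. exfalso; apply Hn. exists x; split; [exact Ex|lra]. }
  destruct (H m Hm0 Hbelow) as [d [Hd HPd]].
  destruct (Rlt_dec m (T+1)) as [Hlt|Hge].
  - exfalso. assert (Min : E (Rmin (m + d) (T + 1))).
    { split. split; [apply Rmin_glb; lra| apply Rmin_r].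
      intros s Hs. apply HPd. pose proof (Rmin_l (m+d) (T+1)). lra. }
    apply Hub in Min. unfold Rmin in Min. destruct (Rle_dec (m+d) (T+1)); lra.
  - apply Hbelow. lra.
Qed.

Lemma cont_nbhd f x eps : continuity_pt f x -> 0 < eps ->
  exists d, 0 < d /\ forall y, Rabs (y - x) < d -> Rabs (f y - f x) < eps.
Proof.
  intros Hc He. apply continuity_pt_filterlim in Hc.
  apply filterlim_locally with (eps := mkposreal _ He) in Hc.
  destruct Hc as [d Hd]. exists d; split; [apply cond_pos|].
  intros y Hy. apply (Hd y). exact Hy.
Qed.

Lemma stay_above f df T a : 0 < T ->
  (forall x, 0 < x -> is_derive f x (df x)) -> a <= f T ->
  (forall x, T < x -> f x < a -> 0 < df x) -> forall t, T <= t -> a <= f t.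
Proof.
  intros HT Hd HfT Hpos t1 Ht1.
  destruct (Rle_dec a (f t1)) as [|Hlt]; [assumption|exfalso].
  apply Rnot_le_lt in Hlt.
  set (E := fun s => T <= s <= t1 /\ a <= f s).
  assert (Eb : bound E). { exists t1. intros x [Hx _]. lra. }
  assert (Ene : exists x, E x). { exists T. split; [lra|exact HfT]. }
  destruct (completeness E Eb Ene) as [m [Hub Hlub]].
  assert (HmT : T <= m). { apply Hub. split; [lra|exact HfT]. }
  assert (Hmt : m <= t1). { apply Hlub. intros x [Hx _]. lra. }
  assert (Hfm : a <= f m).
  { destruct (Rle_dec a (f m)) as [|Hn]; [assumption|exfalso].
    apply Rnot_le_lt in Hn.
    destruct (cont_nbhd f m (a - f m) (cont_of_derive f df m Hd ltac:(lra)) ltac:(lra)) as [d [Hd0 Hdd]].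
    destruct (classic (exists x, E x /\ m - d < x)) as [[x [[Ex1 Ex2] Hx]]|Hn2].
    - assert (x <= m) by (apply Hub; split; assumption).
      assert (Rabs (f x - f m) < a - f m) by (apply Hdd; rewrite Rabs_left1; lra).
      apply Rabs_def2 in H0. lra.
    - assert (m <= m - d); [|lra]. apply Hlub. intros x Ex.
      destruct (Rle_dec x (m - d)) as [|Hxs]; [assumption|]. exfalso; apply Hn2. exists x; split; [exact Ex|lra]. }
  assert (Hm1 : m < t1). { destruct (Req_dec m t1); [subst; lra|lra]. }
  assert (Hafter : forall x, m < x <= t1 -> f x < a).
  { intros x Hx. destruct (Rlt_dec (f x) a) as [|Hn]; [assumption|].
    assert (x <= m) by (apply Hub; split; [lra|lra]). lra. }
  destruct (mvt_open f df m t1 Hm1) as [c [Hc1 Hc2]].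
  - intros x Hx. apply Hd. lra.
  - intros x Hx. apply cont_of_derive with df; [exact Hd|lra].
  - assert (0 < df c) by (apply Hpos; [lra| apply Hafter; lra]).
    assert (0 < df c * (t1 - m)) by (apply Rmult_lt_0_compat; lra). lra.
Qed.

Lemma reach f df T a r : 0 < T -> 0 < r ->
  (forall x, 0 < x -> is_derive f x (df x)) ->
  (forall x, T <= x -> f x < a -> r <= df x) -> exists t, T <= t /\ a <= f t.
Proof.
  intros HT Hr Hd Hc.
  destruct (classic (exists t, T <= t /\ a <= f t)) as [|Hn]; [assumption|exfalso].
  assert (Hall : forall t, T <= t -> f t < a).
  { intros t Ht. destruct (Rlt_dec (f t) a) as [|H]; [assumption|]. exfalso; apply Hn.
    exists t; split; [exact Ht|lra]. }
  set (b := T + Rabs ((a - f T) / r) + 1).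
  assert (Hb : T < b) by (unfold b; pose proof (Rabs_pos ((a - f T)/r)); lra).
  destruct (mvt_open f df T b Hb) as [c [Hc1 Hc2]].
  - intros x Hx. apply Hd. lra.
  - intros x Hx. apply cont_of_derive with df; [exact Hd|lra].
  - assert (r <= df c) by (apply Hc; [lra|apply Hall; lra]).
    assert (r * (b - T) <= df c * (b - T)) by (apply Rmult_le_compat_r; lra).
    assert (Hfb := Hall b ltac:(lra)).
    assert (a - f T <= r * (b - T)).
    { unfold b. replace (T + Rabs ((a - f T) / r) + 1 - T) with (Rabs ((a - f T) / r) + 1) by ring.
      pose proof (Rle_abs ((a - f T) / r)).
      assert (a - f T = r * ((a - f T) / r)) by (field; lra). nra. }
    lra.
Qed.

Lemma d_mexp f t d k : is_derive f t d ->
  is_derive (fun s => f s * exp (k * s)) t ((d + k * f t) * exp (k * t)).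
Proof.
  intros H.
  assert (He : is_derive (fun s => exp (k * s)) t (k * exp (k * t))).
  { auto_derive; [auto| ring]. }
  pose proof (is_derive_mult f (fun s => exp (k * s)) t d _ H He ltac:(intros; apply Rmult_comm)) as Hm.
  simpl in Hm. unfold mult, plus in Hm; simpl in Hm.
  eapply is_derive_ext; [|eapply is_derive_ext_loc]; [intros; reflexivity| apply filter_forall; intros; reflexivity|].
  replace ((d + k * f t) * exp (k * t)) with (d * exp (k * t) + f t * (k * exp (k * t))) by ring. exact Hm.
Qed.

Lemma d_plus f g t df dg : is_derive f t df -> is_derive g t dg ->
  is_derive (fun s => f s + g s) t (df + dg).
Proof. intros. apply (is_derive_plus f g t df dg); assumption. Qed.

Lemma d_opp f t df : is_derive f t df -> is_derive (fun s => - f s) t (- df).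
Proof. intros. apply (is_derive_opp f t df); assumption. Qed.

Lemma d_sq f t d a b : is_derive f t d -> b <> 0 ->
  is_derive (fun s => (f s - a) ^ 2 / b) t (2 * (f t - a) * d / b).
Proof.
  intros H Hb.
  assert (Hg : is_derive (fun y => (y - a) ^ 2 / b) (f t) (2 * (f t - a) / b)).
  { auto_derive; [auto| field; auto]. }
  pose proof (is_derive_comp _ _ t _ _ Hg H) as Hc. simpl in Hc.
  unfold scal in Hc; simpl in Hc; unfold mult in Hc; simpl in Hc.
  replace (2 * (f t - a) * d / b) with (d * (2 * (f t - a) / b)) by (field; auto). exact Hc.
Qed.

Lemma d_ln f t d : is_derive f t d -> 0 < f t ->
  is_derive (fun s => ln (f s)) t (d / f t).
Proof.
  intros H Hp.
  assert (Hg : is_derive ln (f t) (/ f t)).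
  { auto_derive; [auto| field; lra]. }
  pose proof (is_derive_comp _ _ t _ _ Hg H) as Hc. simpl in Hc.
  unfold scal in Hc; simpl in Hc; unfold mult in Hc; simpl in Hc.
  unfold Rdiv. exact Hc.
Qed.

Lemma lyap_core (k5 k7 a1 a2 a3 u1 u2 u3 al k8 : R) :
  0 < k5 -> 0 < k7 -> 0 < k8 -> 0 < a1 -> 0 < a2 -> 0 < a3 -> 0 < al -> al <= k5 -> al <= k8 ->
  k7 * a2 = k8 * a3 -> a1 * u1 + a2 * u2 + a3 * u3 = 0 ->
  -2 * k5 * a1 * (u1 - u2)^2 - 2 * k7 * a2 * (u2 - u3)^2 + al * (a1 * u1^2 + a2 * u2^2 + a3 * u3^2) <= 0.
Proof.
  intros. 
  assert (E : a1 * (u1-u2)^2 + a3 * (u3-u2)^2 = (a1 * u1^2 + a2 * u2^2 + a3 * u3^2) + (a1+a2+a3) * u2^2).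
  { assert (Hd : a1 * (u1-u2)^2 + a3 * (u3-u2)^2 - ((a1 * u1^2 + a2 * u2^2 + a3 * u3^2) + (a1+a2+a3) * u2^2) = -2 * u2 * (a1 * u1 + a2 * u2 + a3 * u3)) by ring.
    rewrite H9 in Hd. lra. }
  assert (0 <= (a1+a2+a3) * u2^2) by (apply Rmult_le_pos; [lra| apply pow2_ge_0]).
  assert (al * (a1 * (u1 - u2)^2) <= k5 * (a1 * (u1-u2)^2)) by (apply Rmult_le_compat_r; [apply Rmult_le_pos; [lra|apply pow2_ge_0]|lra]).
  assert (al * (a3 * (u3 - u2)^2) <= k8 * (a3 * (u3-u2)^2)) by (apply Rmult_le_compat_r; [apply Rmult_le_pos; [lra|apply pow2_ge_0]|lra]).
  assert (k8 * (a3 * (u3 - u2)^2) = k7 * a2 * (u2 - u3)^2) by (rewrite <- Rmult_assoc, <- H8; ring).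
  assert (0 <= k5 * a1 * (u1 - u2)^2) by (apply Rmult_le_pos; [apply Rmult_le_pos; lra|apply pow2_ge_0]).
  assert (0 <= k7 * a2 * (u2 - u3)^2) by (apply Rmult_le_pos; [apply Rmult_le_pos; lra|apply pow2_ge_0]).
  nra.
Qed.

Lemma lyap (k5 k6 k7 k8 q al x1 x2 x3 : R) :
  0 < k5 -> 0 < k6 -> 0 < k7 -> 0 < k8 -> 0 < q -> 0 < al -> al <= k5 -> al <= k8 ->
  x1 + x2 + x3 = k6*k8*q + k5*k8*q + k5*k7*q ->
  2 * (x1 - k6*k8*q) * (k6 * x2 - k5 * x1) / (k6*k8*q)
  + 2 * (x2 - k5*k8*q) * (k5 * x1 + k8 * x3 - (k6 + k7) * x2) / (k5*k8*q)
  + 2 * (x3 - k5*k7*q) * (k7 * x2 - k8 * x3) / (k5*k7*q)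
  + al * ((x1 - k6*k8*q)^2 / (k6*k8*q) + (x2 - k5*k8*q)^2 / (k5*k8*q) + (x3 - k5*k7*q)^2 / (k5*k7*q)) <= 0.
Proof.
  intros.
  set (a1 := k6*k8*q). set (a2 := k5*k8*q). set (a3 := k5*k7*q).
  assert (0 < a1) by (unfold a1; apply Rmult_lt_0_compat; [apply Rmult_lt_0_compat|]; lra).
  assert (0 < a2) by (unfold a2; apply Rmult_lt_0_compat; [apply Rmult_lt_0_compat|]; lra).
  assert (0 < a3) by (unfold a3; apply Rmult_lt_0_compat; [apply Rmult_lt_0_compat|]; lra).
  set (u1 := (x1 - a1)/a1). set (u2 := (x2 - a2)/a2). set (u3 := (x3 - a3)/a3).
  assert (X1 : x1 = a1 * (1 + u1)) by (unfold u1; field; lra).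
  assert (X2 : x2 = a2 * (1 + u2)) by (unfold u2; field; lra).
  assert (X3 : x3 = a3 * (1 + u3)) by (unfold u3; field; lra).
  clearbody u1 u2 u3.
  change (x1+x2+x3 = a1+a2+a3) in H7.   assert (Hc : a1 * u1 + a2 * u2 + a3 * u3 = 0) by (assert (Hs : a1*(1+u1)+a2*(1+u2)+a3*(1+u3) = a1+a2+a3 + (a1*u1+a2*u2+a3*u3)) by ring; rewrite X1, X2, X3 in H7; lra).
  rewrite X1, X2, X3.
  replace (2 * (a1 * (1 + u1) - a1) * (k6 * (a2 * (1 + u2)) - k5 * (a1 * (1 + u1))) / a1 +
   2 * (a2 * (1 + u2) - a2) *
   (k5 * (a1 * (1 + u1)) + k8 * (a3 * (1 + u3)) - (k6 + k7) * (a2 * (1 + u2))) / a2 +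
   2 * (a3 * (1 + u3) - a3) * (k7 * (a2 * (1 + u2)) - k8 * (a3 * (1 + u3))) / a3 +
   al * ((a1 * (1 + u1) - a1) ^ 2 / a1 + (a2 * (1 + u2) - a2) ^ 2 / a2 + (a3 * (1 + u3) - a3) ^ 2 / a3))
  with (-2 * k5 * a1 * (u1 - u2)^2 - 2 * k7 * a2 * (u2 - u3)^2 + al * (a1 * u1^2 + a2 * u2^2 + a3 * u3^2)).
  2:{ unfold a1, a2, a3 in *. field. repeat split; lra. }
  apply lyap_core with k8; try lra. unfold a2, a3; ring.
Qed.

Lemma is_derive_eq (f : R -> R) (x d d' : R) : d = d' -> is_derive f x d -> is_derive f x d'.
Proof. intros ->; auto. Qed.

Lemma pos_step f df k t : 0 < t -> right_cont f 0 -> 0 < f 0 ->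
  (forall x, 0 < x -> is_derive f x (df x)) ->
  (forall x, 0 < x < t -> 0 < df x + k * f x) -> 0 < f t.
Proof.
  intros Ht Hc H0 Hd Hp.
  destruct (mvt0 (fun s => f s * exp (k*s)) (fun s => (df s + k * f s) * exp (k*s)) t Ht) as [xi [Hxi E]].
  - now apply right_cont_mexp.
  - intros x Hx. apply d_mexp. now apply Hd.
  - simpl in E. rewrite Rmult_0_r, exp_0, Rmult_1_r in E.
    assert (0 < (df xi + k * f xi) * exp (k * xi) * t) by (apply Rmult_lt_0_compat; [apply Rmult_lt_0_compat; [apply Hp; lra| apply exp_pos]| lra]).
    assert (0 < f t * exp (k * t)) by lra.
    pose proof (exp_pos (k*t)). nra.
Qed.

Theorem mainTheorem6
  (k1 k2 k5 k6 k7 k8 theta mu : R)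
  (c cp cpp xs z : R -> R) :
  0 < k1 -> 0 < k2 -> 0 < k5 -> 0 < k6 -> 0 < k7 -> 0 < k8 ->
  0 < theta -> 0 < mu ->
  0 < c 0 -> 0 < cp 0 -> 0 < cpp 0 -> 0 < xs 0 -> 0 < z 0 ->
  right_cont c 0 -> right_cont cp 0 -> right_cont cpp 0 ->
  right_cont xs 0 -> right_cont z 0 ->
  (forall t, 0 < t -> is_derive c t (k6 * cp t - k5 * c t)) ->
  (forall t, 0 < t -> is_derive cp t (k5 * c t + k8 * cpp t - (k6 + k7) * cp t)) ->
  (forall t, 0 < t -> is_derive cpp t (k7 * cp t - k8 * cpp t)) ->
  (forall t, 0 < t -> is_derive xs t
      (k2 * cpp t * m_of k1 k2 theta mu (xs t) (z t) (cpp t) - k1 * xs t)) ->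
  (forall t, 0 < t -> is_derive z t
      (z t * (theta * m_of k1 k2 theta mu (xs t) (z t) (cpp t) - mu))) ->
  let M := xs 0 + z 0 in
  let L := c 0 + cp 0 + cpp 0 in
  theta * k1 * M > mu * k2 * cpp_bar k5 k6 k7 k8 L ->
  is_lim z p_infty
    (Finite ((theta * k1 * M - mu * k2 * cpp_bar k5 k6 k7 k8 L) / (theta * k1))).
Proof.
  intros Hk1 Hk2 Hk5 Hk6 Hk7 Hk8 Hth Hmu Hc0 Hcp0 Hcpp0 Hxs0 Hz0 Rc Rcp Rcpp Rxs Rz Dc Dcp Dcpp Dxs Dz M L Hgt.
  assert (Pos : forall t, 0 <= t -> 0 < c t /\ 0 < cp t /\ 0 < cpp t /\ 0 < xs t /\ 0 < z t).
  { apply cont_induction. intros t Ht IH.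
    assert (Pt : 0 < c t /\ 0 < cp t /\ 0 < cpp t /\ 0 < xs t /\ 0 < z t).
    { destruct (Rle_lt_or_eq_dec 0 t Ht) as [Htp| <-]; [|repeat split; assumption].
      assert (Hm : forall x, 0 < x < t -> 0 < m_of k1 k2 theta mu (xs x) (z x) (cpp x)).
      { intros x Hx. destruct (IH x ltac:(lra)) as (?&?&?&?&?). unfold m_of.
        apply Rdiv_lt_0_compat; nra. }
      repeat split.
      - apply (pos_step c _ k5 t Htp Rc Hc0 Dc). intros x Hx. destruct (IH x ltac:(lra)) as (?&?&?&?&?). nra.
      - apply (pos_step cp _ (k6+k7) t Htp Rcp Hcp0 Dcp). intros x Hx. destruct (IH x ltac:(lra)) as (?&?&?&?&?). nra.
      - apply (pos_step cpp _ k8 t Htp Rcpp Hcpp0 Dcpp). intros x Hx. destruct (IH x ltac:(lra)) as (?&?&?&?&?). nra.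
      - apply (pos_step xs _ k1 t Htp Rxs Hxs0 Dxs). intros x Hx. pose proof (Hm x Hx) as Hmm.
        destruct (IH x ltac:(lra)) as (?&?&?&?&?). cbv beta.
        revert Hmm. generalize (m_of k1 k2 theta mu (xs x) (z x) (cpp x)). intros mm Hmm.
        assert (0 < k2 * cpp x * mm) by (apply Rmult_lt_0_compat; [apply Rmult_lt_0_compat|]; lra). lra.
      - apply (pos_step z _ mu t Htp Rz Hz0 Dz). intros x Hx. pose proof (Hm x Hx) as Hmm.
        destruct (IH x ltac:(lra)) as (?&?&?&?&?). cbv beta.
        revert Hmm. generalize (m_of k1 k2 theta mu (xs x) (z x) (cpp x)). intros mm Hmm.
        assert (0 < z x * (theta * mm)) by (apply Rmult_lt_0_compat; [|apply Rmult_lt_0_compat]; lra). lra. }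
    destruct Pt as (P1&P2&P3&P4&P5).
    assert (RC : forall f df, right_cont f 0 -> (forall x, 0 < x -> is_derive f x (df x)) -> right_cont f t).
    { intros f df H0 Hd. destruct (Rle_lt_or_eq_dec 0 t Ht) as [Htp| <-]; [now apply right_cont_of_derive with df| exact H0]. }
    destruct (right_cont_pos c t (RC c _ Rc Dc) P1) as [d1 [Hd1 N1]].
    destruct (right_cont_pos cp t (RC cp _ Rcp Dcp) P2) as [d2 [Hd2 N2]].
    destruct (right_cont_pos cpp t (RC cpp _ Rcpp Dcpp) P3) as [d3 [Hd3 N3]].
    destruct (right_cont_pos xs t (RC xs _ Rxs Dxs) P4) as [d4 [Hd4 N4]].
    destruct (right_cont_pos z t (RC z _ Rz Dz) P5) as [d5 [Hd5 N5]].
    set (dd := Rmin d1 (Rmin d2 (Rmin d3 (Rmin d4 d5)))).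
    assert (E1 : dd <= d1) by apply Rmin_l.
    assert (E2 : dd <= d2) by (eapply Rle_trans; [apply Rmin_r| apply Rmin_l]).
    assert (E3 : dd <= d3) by (eapply Rle_trans; [apply Rmin_r| eapply Rle_trans; [apply Rmin_r| apply Rmin_l]]).
    assert (E4 : dd <= d4) by (eapply Rle_trans; [apply Rmin_r| eapply Rle_trans; [apply Rmin_r| eapply Rle_trans; [apply Rmin_r| apply Rmin_l]]]).
    assert (E5 : dd <= d5) by (eapply Rle_trans; [apply Rmin_r| eapply Rle_trans; [apply Rmin_r| eapply Rle_trans; [apply Rmin_r| apply Rmin_r]]]).
    exists dd. split.
    { unfold dd. repeat apply Rmin_glb_lt; assumption. }
    intros s Hs. destruct (Rlt_dec s t) as [Hst|Hst]; [apply IH; lra|].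
    repeat split; [apply N1|apply N2|apply N3|apply N4|apply N5]; lra. }
  assert (ConsL : forall t, 0 < t -> c t + cp t + cpp t = L).
  { intros t Ht. destruct (mvt0 (fun s => c s + cp s + cpp s) (fun _ => 0) t Ht) as [xi [_ E]].
    - apply right_cont_plus; [apply right_cont_plus|]; assumption.
    - intros x Hx. apply (is_derive_eq _ _ ((k6 * cp x - k5 * c x) + (k5 * c x + k8 * cpp x - (k6 + k7) * cp x) + (k7 * cp x - k8 * cpp x))); [ring|].
      apply d_plus; [apply d_plus|]; auto.
    - unfold L. lra. }
  assert (ConsM : forall t, 0 < t -> xs t + z t = M).
  { intros t Ht. destruct (mvt0 (fun s => xs s + z s) (fun _ => 0) t Ht) as [xi [_ E]].
    - apply right_cont_plus; assumption.
    - intros x Hx. destruct (Pos x ltac:(lra)) as (?&?&?&?&?).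
      apply (is_derive_eq _ _ ((k2 * cpp x * m_of k1 k2 theta mu (xs x) (z x) (cpp x) - k1 * xs x) + (z x * (theta * m_of k1 k2 theta mu (xs x) (z x) (cpp x) - mu)))).
      { unfold m_of. field. nra. }
      apply d_plus; auto.
    - unfold M. lra. }
  assert (HL : 0 < L) by (unfold L; lra).
  set (D := k6 * k8 + k5 * k8 + k5 * k7).
  assert (HD : 0 < D) by (unfold D; nra).
  set (q := L / D).
  assert (Hq : 0 < q) by (unfold q; apply Rdiv_lt_0_compat; lra).
  set (al := Rmin k5 k8).
  assert (Hal : 0 < al) by (apply Rmin_glb_lt; lra).
  set (a1 := k6*k8*q). set (a2 := k5*k8*q). set (a3 := k5*k7*q).
  assert (Ha1 : 0 < a1) by (unfold a1; apply Rmult_lt_0_compat; [apply Rmult_lt_0_compat|]; lra).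
  assert (Ha2 : 0 < a2) by (unfold a2; apply Rmult_lt_0_compat; [apply Rmult_lt_0_compat|]; lra).
  assert (Ha3 : 0 < a3) by (unfold a3; apply Rmult_lt_0_compat; [apply Rmult_lt_0_compat|]; lra).
  set (V := fun s => (c s - a1)^2/a1 + (cp s - a2)^2/a2 + (cpp s - a3)^2/a3).
  set (dV := fun s => 2 * (c s - a1) * (k6 * cp s - k5 * c s) / a1
     + 2 * (cp s - a2) * (k5 * c s + k8 * cpp s - (k6 + k7) * cp s) / a2
     + 2 * (cpp s - a3) * (k7 * cp s - k8 * cpp s) / a3).
  assert (DV : forall s, 0 < s -> is_derive V s (dV s)).
  { intros s Hs. unfold V, dV. apply d_plus; [apply d_plus|]; apply d_sq; auto; lra. }
  assert (Hneg : forall s, 0 < s -> dV s + al * V s <= 0).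
  { intros s Hs. unfold dV, V, a1, a2, a3. apply lyap; try lra.
    - apply Rmin_l.
    - apply Rmin_r.
    - rewrite ConsL by lra. unfold q, D. field. unfold D in HD. lra. }
  assert (Vnn : forall s, 0 <= V s).
  { intros s. unfold V. 
    assert (forall y a, 0 < a -> 0 <= y^2/a) by (intros y a Ha; apply Rdiv_le_0_compat; [apply pow2_ge_0|lra]).
    pose proof (H (c s - a1) a1 Ha1). pose proof (H (cp s - a2) a2 Ha2). pose proof (H (cpp s - a3) a3 Ha3). lra. }
  assert (Dec : forall t, 1 <= t -> V t <= V 1 * exp (al * (1 - t))).
  { intros t Ht. destruct (Rle_lt_or_eq_dec 1 t Ht) as [Hlt| <-]; [| rewrite Rminus_diag, Rmult_0_r, exp_0; lra].
    destruct (mvt_open (fun s => V s * exp (al * s)) (fun s => (dV s + al * V s) * exp (al * s)) 1 t Hlt) as [xi [Hxi E]].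
    - intros x Hx. apply d_mexp. apply DV; lra.
    - intros x Hx. apply cont_of_derive with (fun s => (dV s + al * V s) * exp (al * s)); [|lra].
      intros y Hy. apply d_mexp, DV; lra.
    - assert (0 <= - (dV xi + al * V xi) * exp (al * xi) * (t - 1)).
      { apply Rmult_le_pos; [apply Rmult_le_pos|]. 
        pose proof (Hneg xi ltac:(lra)); lra. apply Rlt_le, exp_pos. lra. }
      assert (Hv : V t * exp (al * t) <= V 1 * exp (al * 1)) by lra.
      assert (He : exp (al * 1) = exp (al * (1 - t)) * exp (al * t)) by (rewrite <- exp_plus; f_equal; ring).
      rewrite He in Hv.
      apply Rmult_le_reg_r with (exp (al * t)); [apply exp_pos|]. lra. }
  assert (a3E : a3 = cpp_bar k5 k6 k7 k8 L).
  { unfold a3, q, cpp_bar, D. field. unfold D in HD. split; [|lra]. replace ((k6 * k8) ^ 2 + k5 * k6 * k8 ^ 2 + k5 * k6 * k7 * k8) with ((k6 * k8) * (k6 * k8 + k5 * k8 + k5 * k7)) by ring. apply Rmult_integral_contrapositive_currified; [nra|lra]. }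
  assert (CppLim : forall eta, 0 < eta -> exists T1, 1 <= T1 /\ forall t, T1 <= t -> Rabs (cpp t - a3) < eta).
  { intros eta Heta.
    set (K := a3 * V 1 + 1).
    assert (HK : 0 < K) by (unfold K; pose proof (Vnn 1); nra).
    set (w := eta^2 / K).
    assert (Hw : 0 < w) by (unfold w; apply Rdiv_lt_0_compat; nra).
    assert (Hr : 0 <= Rabs (ln w) / al) by (apply Rdiv_le_0_compat; [apply Rabs_pos|lra]).
    exists (2 + Rabs (ln w) / al). split; [lra|].
    intros t Ht.
    assert (Hexp : exp (al * (1 - t)) < w).
    { rewrite <- (exp_ln w Hw). apply exp_increasing.
      assert (al * (1 - t) <= al * (-1 - Rabs (ln w) / al)) by (apply Rmult_le_compat_l; lra).
      assert (al * (-1 - Rabs (ln w) / al) = - al - Rabs (ln w)) by (field; lra).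
      pose proof (Rle_abs (- ln w)). rewrite Rabs_Ropp in H1. lra. }
    assert (Hsq : (cpp t - a3)^2 <= a3 * V t).
    { unfold V.
      assert (forall y a, 0 < a -> 0 <= y^2/a) by (intros y a Ha; apply Rdiv_le_0_compat; [apply pow2_ge_0|lra]).
      pose proof (H (c t - a1) a1 Ha1). pose proof (H (cp t - a2) a2 Ha2).
      assert (a3 * ((cpp t - a3)^2/a3) = (cpp t - a3)^2) by (field; lra). nra. }
    assert (HVt := Dec t ltac:(lra)).
    pose proof (exp_pos (al * (1 - t))). pose proof (Vnn 1).
    assert (a3 * V t <= a3 * (V 1 * exp (al * (1 - t)))) by (apply Rmult_le_compat_l; lra).
    assert (a3 * V 1 * exp (al * (1 - t)) <= K * exp (al * (1 - t))) by (apply Rmult_le_compat_r; unfold K; lra).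
    assert (K * exp (al * (1 - t)) < K * w) by (apply Rmult_lt_compat_l; lra).
    assert (K * w = eta ^ 2) by (unfold w; field; lra).
    assert (Hfin : (cpp t - a3)^2 < eta^2) by nra.
    destruct (Rcase_abs (cpp t - a3)) as [Hn|Hp].
    - rewrite Rabs_left by lra. nra.
    - rewrite Rabs_right by lra. nra. }
  rewrite <- a3E in Hgt |- *.
  set (P := theta * k1). set (Q := mu * k2).
  assert (HP : 0 < P) by (unfold P; nra). assert (HQ : 0 < Q) by (unfold Q; nra).
  set (zs := (P * M - Q * a3) / P).
  assert (Hzs : 0 < zs) by (unfold zs; apply Rdiv_lt_0_compat; [unfold P, Q; lra | lra]).
  assert (Hzs2 : P * zs = P * M - Q * a3) by (unfold zs; field; lra).
  set (D0 := k2 * L + theta * M).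
  set (den := fun t => k2 * cpp t + theta * z t).
  assert (Facts : forall t, 0 < t -> 0 < z t /\ z t < M /\ 0 < den t /\ den t < D0).
  { intros t Ht. destruct (Pos t ltac:(lra)) as (?&?&?&?&?). pose proof (ConsL t Ht). pose proof (ConsM t Ht).
    unfold den, D0. repeat split; try lra; nra. }
  set (zd := fun t => z t * (theta * m_of k1 k2 theta mu (xs t) (z t) (cpp t) - mu)).
  assert (Zid : forall t, 0 < t -> zd t * den t = z t * (P * (M - z t) - Q * cpp t)).
  { intros t Ht. destruct (Facts t Ht) as (?&?&?&?). pose proof (ConsM t Ht).
    unfold zd, m_of, P, Q. unfold den in *. replace (xs t) with (M - z t) by lra. field. lra. }
  assert (Hzd : forall t, 0 < t -> is_derive z t (zd t)) by (intros; unfold zd; auto).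
  apply is_lim_spec. intros eps. simpl.
  set (ep := Rmin eps zs).
  assert (Hep : 0 < ep) by (apply Rmin_glb_lt; [apply cond_pos|lra]).
  assert (Hep1 : ep <= eps) by apply Rmin_l. assert (Hep2 : ep <= zs) by apply Rmin_r.
  set (eta := P * ep / (4 * Q)).
  assert (Heta : 0 < eta) by (unfold eta; apply Rdiv_lt_0_compat; [apply Rmult_lt_0_compat|]; lra).
  assert (HQeta : Q * eta = P * ep / 4) by (unfold eta; field; lra).
  assert (Hpe : 0 < P * ep / 4) by (apply Rdiv_lt_0_compat; [apply Rmult_lt_0_compat|]; lra).
  destruct (CppLim eta Heta) as [T1 [HT1 HC]].
  assert (HM : 0 < M) by (unfold M; lra).
  assert (HD0 : 0 < D0) by (unfold D0; apply Rplus_lt_0_compat; apply Rmult_lt_0_compat; lra).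
  set (r := zs * P * ep / (4 * D0)).
  assert (Hr : 0 < r) by (unfold r; apply Rdiv_lt_0_compat; [apply Rmult_lt_0_compat; [apply Rmult_lt_0_compat|]|]; lra).
  assert (HrD : r * D0 = zs * P * ep / 4) by (unfold r; field; lra).
  set (r2 := P * ep / (4 * D0)).
  assert (Hr2 : 0 < r2) by (unfold r2; apply Rdiv_lt_0_compat; [apply Rmult_lt_0_compat|]; lra).
  assert (Hr2D : r2 * D0 = P * ep / 4) by (unfold r2; field; lra).
  assert (Nb : forall x, T1 <= x -> Q * (cpp x - a3) < P * ep / 4 /\ - (P * ep / 4) < Q * (cpp x - a3)).
  { intros x Hx. pose proof (HC x Hx) as H. apply Rabs_def2 in H. destruct H.
    rewrite <- HQeta. split; [apply Rmult_lt_compat_l; lra|].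
    replace (- (Q * eta)) with (Q * (- eta)) by ring. apply Rmult_lt_compat_l; lra. }
  assert (Up : forall x, T1 <= x -> zs + ep / 2 < z x -> r <= - zd x).
  { intros x Hx Hz. destruct (Facts x ltac:(lra)) as (?&?&?&?). pose proof (Zid x ltac:(lra)) as Zx.
    destruct (Nb x Hx) as [Nb1 Nb2].
    set (N := P * (M - z x) - Q * cpp x) in *.
    assert (HN : N = P * (zs - z x) - Q * (cpp x - a3)) by (unfold N; nra).
    assert (P * (zs - z x) <= P * (- (ep / 2))) by (apply Rmult_le_compat_l; lra).
    assert (HN2 : N <= - (P * ep / 4)) by lra.
    assert (z x * N <= z x * (- (P * ep / 4))) by (apply Rmult_le_compat_l; lra).
    assert (zs * (P * ep / 4) <= z x * (P * ep / 4)) by (apply Rmult_le_compat_r; lra).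
    assert (r * den x <= r * D0) by (apply Rmult_le_compat_l; lra).
    nra. }
  assert (Lo : forall x, T1 <= x -> z x < zs - ep / 2 -> r2 <= zd x / z x).
  { intros x Hx Hz. destruct (Facts x ltac:(lra)) as (?&?&?&?). pose proof (Zid x ltac:(lra)) as Zx.
    destruct (Nb x Hx) as [Nb1 Nb2].
    set (N := P * (M - z x) - Q * cpp x) in *.
    assert (HN : N = P * (zs - z x) - Q * (cpp x - a3)) by (unfold N; nra).
    assert (P * (ep / 2) <= P * (zs - z x)) by (apply Rmult_le_compat_l; lra).
    assert (HN2 : P * ep / 4 <= N) by lra.
    assert (HX : zd x / z x * den x = N) by (apply (Rmult_eq_reg_l (z x)); [|lra]; rewrite <- Zx; field; lra).
    assert (r2 * den x <= r2 * D0) by (apply Rmult_le_compat_l; lra).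
    nra. }
  destruct (reach (fun s => - z s) (fun s => - zd s) T1 (- (zs + ep / 2)) r ltac:(lra) Hr) as [T2 [HT2 HzT2]].
  { intros x Hx. apply d_opp. auto. }
  { intros x Hx Hlt. apply Up; lra. }
  assert (Upper := stay_above (fun s => - z s) (fun s => - zd s) T2 (- (zs + ep / 2)) ltac:(lra)
     ltac:(intros x Hx; apply d_opp; auto) HzT2 ltac:(intros x Hx Hlt; pose proof (Up x ltac:(lra) ltac:(lra)); lra)).
  assert (Hzl : 0 < zs - ep / 2) by lra.
  assert (Dln : forall x, 0 < x -> is_derive (fun s => ln (z s)) x (zd x / z x)).
  { intros x Hx. apply d_ln; auto. apply Facts; auto. }
  assert (LoL : forall x, T1 <= x -> ln (z x) < ln (zs - ep / 2) -> r2 <= zd x / z x).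
  { intros x Hx Hlt. apply Lo; auto. apply ln_lt_inv; auto. apply Facts; lra. }
  destruct (reach (fun s => ln (z s)) (fun s => zd s / z s) T1 (ln (zs - ep / 2)) r2 ltac:(lra) Hr2 Dln LoL) as [T3 [HT3 HzT3]].
  assert (Lower := stay_above (fun s => ln (z s)) (fun s => zd s / z s) T3 (ln (zs - ep / 2)) ltac:(lra)
     Dln HzT3 ltac:(intros x Hx Hlt; pose proof (LoL x ltac:(lra) Hlt); lra)).
  exists (Rmax T2 T3). intros x Hx.
  pose proof (Rmax_l T2 T3). pose proof (Rmax_r T2 T3).
  pose proof (Upper x ltac:(lra)) as U. simpl in U.
  pose proof (Lower x ltac:(lra)) as W. simpl in W.
  assert (zs - ep / 2 <= z x).
  { destruct (Rle_dec (zs - ep / 2) (z x)) as [|Hn]; [assumption|].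
    apply Rnot_le_lt in Hn. pose proof (ln_increasing _ _ (proj1 (Facts x ltac:(lra))) Hn). lra. }
  apply Rabs_def1; lra.
Qed.
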